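(* Let $U,V\in\mathbb{R}^{3\times3}$ be symmetric positive definite with $U\neq V$, $UV=VU$, and $V=RUR^T$ for some $R\in SO(3)$. Suppose the eigenvalues of $U$ satisfy $0<\lambda_1<\lambda_2=1<\lambda_3$, that $U$ and $V$ have a common eigenvector for the eigenvalue $1$, and that $$\lambda_3=\sqrt{2-\lambda_1^2}.$$ Then there exist rotations $R_u^{+},R_v^{+},R_u^{-},R_v^{-}\in SO(3)$, vectors $b_u^{\pm},b_v^{\pm}\in\mathbb{R}^3$ and unit vectors $\hat m^{+},\hat m^{-}$ with $\hat m^{+}\nparallel\hat m^{-}$ such that, for each sign, $$R_u^{\pm}U-I=b_u^{\pm}\otimes\hat m^{\pm},\qquad R_v^{\pm}V-I=b_v^{\pm}\otimes\hat m^{\pm},$$ and hence $R_u^{\pm}U-R_v^{\pm}V=(b_u^{\pm}-b_v^{\pm})\otimes\hat m^{\pm}$. That is, $U$, $V$ and the identity form two distinct planar triple clusters in which the three pairwise differences are rank-one with a common normal.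
   Context: Here $I$ is the identity matrix (representing austenite) and $SO(3)$ the rotation group. *)

(* Defs.v *)
From HB Require Import structures.
From mathcomp Require Import all_boot all_order all_algebra.
From mathcomp Require Import reals.
Set Implicit Arguments. Unset Strict Implicit. Unset Printing Implicit Defensive.
Import Order.TTheory GRing.Theory Num.Theory.
Local Open Scope ring_scope.

Section Defs.
Variable R : realType.

Definition symmetric3 (A : 'M[R]_3) : Prop := A^T = A.

Definition posdef3 (A : 'M[R]_3) : Prop :=
  forall v : 'cV[R]_3, v != 0 -> 0 < (v^T *m A *m v) 0 0.

Definition spd3 (A : 'M[R]_3) : Prop := symmetric3 A /\ posdef3 A.

Definition SO3 (Q : 'M[R]_3) : Prop := Q^T *m Q = 1%:M /\ \det Q = 1.

Definition is_eigenvalue3 (A : 'M[R]_3) (a : R) : Prop :=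
  exists v : 'cV[R]_3, v != 0 /\ A *m v = a *: v.

Definition unit_vec3 (m : 'cV[R]_3) : Prop := (m^T *m m) 0 0 = 1.

Definition parallel3 (a b : 'cV[R]_3) : Prop :=
  exists c : R, a = c *: b \/ b = c *: a.

Definition tensor3 (b m : 'cV[R]_3) : 'M[R]_3 := b *m m^T.
End Defs.

(* Main.v *)
Require Import Defs.
From HB Require Import structures.
From mathcomp Require Import all_boot all_order all_algebra.
From mathcomp Require Import reals.
From mathcomp Require Import ring lra.
Import Order.TTheory GRing.Theory Num.Theory.
Local Open Scope ring_scope.
Section S.
Set Implicit Arguments. Unset Strict Implicit.
Variable R : realType.
Definition M3 (l : seq (seq R)) : 'M[R]_3 := \matrix_(i < 3, j < 3) (nth [::] l i)`_j.
Definition V3 (x y z : R) : 'cV[R]_3 := \col_(i < 3) [:: x; y; z]`_i.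
Definition dv (x y z : R) : 'rV[R]_3 := \row_(j < 3) [:: x; y; z]`_j.
Definition Dg (x y z : R) := diag_mx (dv x y z).
Definition Rot (k a c : R) :=
  let C := (a + c) / 2 in let S := k * (a - c) / 2 in
  M3 [:: [:: C; 0; - S]; [:: 0; 1; 0]; [:: S; 0; C]].

Lemma det_Rot k a c : k ^+ 2 = 1 -> a ^+ 2 + c ^+ 2 = 2 -> \det (Rot k a c) = 1.
Proof.
move=> hk hac.
rewrite (expand_det_row _ 0) !big_ord_recl big_ord0 /cofactor !mxE /=.
rewrite !(expand_det_row _ 0) !big_ord_recl big_ord0 /cofactor /=.
rewrite !det_mx11 !mxE /=.
rewrite !big_ord0 /bump /= !expr0 !expr1 !mulr0 !mul0r !addr0 !add0r !mul1r.
have e: (-1:R) ^+ (0 + (1 + (1 + 0))) = 1 by rewrite /= expr2 mulN1r opprK.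
rewrite e mul1r.
have ->: (a + c) / 2 * ((a + c) / 2) + - (k * (a - c) / 2) * (-1 * (k * (a - c) / 2)) = ((a+c)^+2 + k^+2 * (a-c)^+2) / 4 by field.
rewrite hk mul1r.
have h4: (4:R) != 0 by rewrite pnatr_eq0.
apply: (mulIf h4). rewrite mul1r divfK //. rewrite -[RHS](_ : 2 * (a^+2 + c^+2) = 4); last by rewrite hac; ring. ring.
Qed.


Definition nrm (k r : R) := V3 r 0 (- k * r).
Definition bv (k a c r : R) :=
  let C := (a + c) / 2 in let S := k * (a - c) / 2 in
  V3 (2 * r * (C * a - 1)) 0 (2 * r * (S * a)).

Ltac ent := apply/matrixP => [[[|[|[|?]]] ?]] [[|[|[|?]]] ?] //;
  rewrite !mxE ?big_ord_recl ?big_ord0 ?mxE /= ?mulr1n ?mulr0n.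

Lemma eq_by (x y z : R) : x - y = z -> z = 0 -> x = y.
Proof. by move=> <- /eqP; rewrite subr_eq0 => /eqP. Qed.

Lemma CS1 (k a c : R) : k ^+ 2 = 1 -> a ^+ 2 + c ^+ 2 = 2 ->
  (a + c) / 2 * ((a + c) / 2) + k * (a - c) / 2 * (k * (a - c) / 2) = 1.
Proof.
move=> hk hac.
have ->: (a + c) / 2 * ((a + c) / 2) + k * (a - c) / 2 * (k * (a - c) / 2) = ((a+c)^+2 + k^+2 * (a-c)^+2) / 4 by field.
rewrite hk mul1r.
have h4: (4:R) != 0 by rewrite pnatr_eq0.
apply: (mulIf h4). rewrite mul1r divfK //. rewrite -[RHS](_ : 2 * (a^+2 + c^+2) = 4); last by rewrite hac; ring. ring.
Qed.

Lemma Rot_orth k a c : k ^+ 2 = 1 -> a ^+ 2 + c ^+ 2 = 2 ->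
  (Rot k a c)^T *m Rot k a c = 1%:M.
Proof.
move=> hk hac; have h := @CS1 k a c hk hac; ent; try ring; by rewrite -[RHS]h; ring.
Qed.

Lemma Rot_rank1 (k a c : R) : k ^+ 2 = 1 -> a ^+ 2 + c ^+ 2 = 2 ->
  Rot k a c *m Dg a 1 c - 1%:M = V3 ((a + c) / 2 * a - 1) 0 (k * (a - c) / 2 * a) *m (V3 1 0 (-k))^T.
Proof.
move=> hk hac; ent; try ring.
  apply: (@eq_by _ _ (k/2 * (a^+2+c^+2-2))).
  field=> //. by rewrite hac subrr mulr0.
apply: (@eq_by _ _ ((k^+2 - 1)*(a-c)*a/2 + (a^+2+c^+2-2)/2)); first (field=> //).
by rewrite hac hk !subrr !mul0r add0r.
Qed.

Definition dot (x y : 'cV[R]_3) := (x^T *m y) 0 0.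
Definition matg (g : 'I_3 -> 'cV[R]_3) : 'M[R]_3 := \matrix_(i < 3, j < 3) g j i 0.

Lemma matgE (g : 'I_3 -> 'cV[R]_3) (A : 'M[R]_3) j k :
  ((matg g)^T *m A *m matg g) j k = dot (g j) (A *m g k).
Proof.
rewrite -mulmxA !mxE /dot mxE; apply: eq_bigr => i _; rewrite !mxE; congr (_ * _).
by apply: eq_bigr => l _; rewrite !mxE.
Qed.

Lemma matg_eig (g : 'I_3 -> 'cV[R]_3) (A : 'M[R]_3) (d : 'rV[R]_3) :
  (forall j, A *m g j = d 0 j *: g j) -> A *m matg g = matg g *m diag_mx d.
Proof.
move=> h; apply/matrixP => i j; rewrite mul_mx_diag !mxE.
have -> : \sum_l A i l * matg g l j = (A *m g j) i 0.
  by rewrite mxE; apply: eq_bigr => l _; rewrite !mxE.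
by rewrite h !mxE mulrC.
Qed.

Lemma dotC x y : dot x y = dot y x.
Proof. by rewrite /dot !mxE; apply: eq_bigr => i _; rewrite !mxE mulrC. Qed.

Lemma dotZl a x y : dot (a *: x) y = a * dot x y.
Proof. by rewrite /dot linearZ /= -scalemxAl mxE. Qed.

Lemma dotZr a x y : dot x (a *: y) = a * dot x y.
Proof. by rewrite /dot -scalemxAr mxE. Qed.

Lemma dot_sym_mx (A : 'M[R]_3) x y : A^T = A -> dot (A *m x) y = dot x (A *m y).
Proof. by move=> hA; rewrite /dot trmx_mul hA mulmxA. Qed.

Lemma dot_eig0 (A : 'M[R]_3) x y p q : A^T = A -> A *m x = p *: x -> A *m y = q *: y ->
  p != q -> dot x y = 0.
Proof.
move=> hA hx hy hpq; have := @dot_sym_mx A x y hA.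
rewrite hx hy dotZl dotZr => /eqP; rewrite -subr_eq0 -mulrBl mulf_eq0 subr_eq0 (negbTE hpq) /=.
by move/eqP.
Qed.

Lemma dot_pos (A : 'M[R]_3) x p : posdef3 A -> A *m x = p *: x -> 0 < p -> x != 0 -> 0 < dot x x.
Proof.
move=> hA hx hp hx0; have := hA x hx0; rewrite -mulmxA hx -/(dot _ _) -/(dot _ _) dotZr.
by rewrite pmulr_rgt0.
Qed.

Definition nz (x : 'cV[R]_3) := (Num.sqrt (dot x x))^-1 *: x.

Lemma nz_unit x : 0 < dot x x -> dot (nz x) (nz x) = 1.
Proof.
move=> hx; rewrite /nz dotZl dotZr.
have hs : 0 < Num.sqrt (dot x x) by rewrite sqrtr_gt0.
have hs2 := sqr_sqrtr (ltW hx).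
rewrite -{3}hs2 expr2; field; by rewrite gt_eqF.
Qed.

Lemma nz_eig (A : 'M[R]_3) x p : A *m x = p *: x -> A *m nz x = p *: nz x.
Proof. by move=> h; rewrite /nz -scalemxAr h !scalerA mulrC. Qed.

Lemma nz_orth x y : dot x y = 0 -> dot (nz x) (nz y) = 0.
Proof. by move=> h; rewrite /nz dotZl dotZr h !mulr0. Qed.

Lemma scal_eq (a b w : R) : a != b -> a * w = w * b -> w = 0.
Proof.
move=> hab h; apply/eqP; move: h => /eqP; rewrite -subr_eq0 [w * b]mulrC -mulrBl mulf_eq0 subr_eq0 (negbTE hab) /=.
by [].
Qed.

Lemma trDg x y z : \tr (Dg x y z) = x + y + z.
Proof. by rewrite mxtrace_diag !big_ord_recl big_ord0 !mxE /= addr0 addrA. Qed.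

Lemma trDg2 x y z : \tr (Dg x y z *m Dg x y z) = x * x + y * y + z * z.
Proof. by rewrite /mxtrace !big_ord_recl big_ord0 mul_diag_mx !mxE /= ?mulr1n addr0 addrA. Qed.

Lemma basis (U V Q : 'M[R]_3) (l1 l3 : R) :
  spd3 U -> spd3 V -> U != V -> U *m V = V *m U ->
  SO3 Q -> V = Q *m U *m Q^T ->
  0 < l1 -> l1 < 1 -> 1 < l3 ->
  is_eigenvalue3 U l1 -> is_eigenvalue3 U l3 ->
  (exists e : 'cV[R]_3, e != 0 /\ U *m e = e /\ V *m e = e) ->
  exists P : 'M[R]_3, [/\ P^T *m P = 1%:M, P *m P^T = 1%:M,
     U = P *m Dg l1 1 l3 *m P^T & V = P *m Dg l3 1 l1 *m P^T].
Proof.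
move=> [sU pU] [sV pV] hUV hc [hQ _] hVQ h0 h1 h2 [v1 [v1n hv1]] [v3 [v3n hv3]] [e [en [hUe hVe]]].
rewrite /symmetric3 in sU sV.
have hUe' : U *m e = 1 *: e by rewrite scale1r.
have hVe' : V *m e = 1 *: e by rewrite scale1r.
have n01 : l1 != 1 by rewrite lt_eqF.
have n12 : (1:R) != l3 by rewrite lt_eqF.
have n02 : l1 != l3 by rewrite lt_eqF // (lt_trans h1 h2).
have d1 := dot_pos pU hv1 h0 v1n.
have d2 := dot_pos pU hUe' ltr01 en.
have d3 := dot_pos pU hv3 (lt_trans ltr01 h2) v3n.
have o12 := nz_orth (dot_eig0 sU hv1 hUe' n01).
have o13 := nz_orth (dot_eig0 sU hv1 hv3 n02).
have o23 := nz_orth (dot_eig0 sU hUe' hv3 n12).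
have u1 := nz_unit d1. have u2 := nz_unit d2. have u3 := nz_unit d3.
pose g := fun j : 'I_3 => [:: nz v1; nz e; nz v3]`_j.
pose P := matg g.
have hPP : P^T *m P = 1%:M.
  apply/matrixP => j k; have := matgE g 1%:M j k; rewrite mulmx1 => ->.
  rewrite mul1mx mxE.
  case: j => [[|[|[|j]]] hj] //; case: k => [[|[|[|k]]] hk] //=;
   rewrite ?u1 ?u2 ?u3 ?o12 ?o13 ?o23 // dotC ?o12 ?o13 ?o23 //.
have hPPt : P *m P^T = 1%:M by apply: mulmx1C.
have hUP : U *m P = P *m Dg l1 1 l3.
  apply: matg_eig => -[[|[|[|j]]] hj] //=; rewrite !mxE /g /=; exact: nz_eig.
have hU : U = P *m Dg l1 1 l3 *m P^T by rewrite -hUP -mulmxA hPPt mulmx1.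
have hD : P^T *m U *m P = Dg l1 1 l3 by rewrite -mulmxA hUP mulmxA hPP mul1mx.
pose W := P^T *m V *m P.
have hcomm : Dg l1 1 l3 *m W = W *m Dg l1 1 l3.
  rewrite -hD /W !mulmxA -(mulmxA (P^T *m U) P) hPPt mulmx1.
  rewrite -(mulmxA (P^T *m V) P) hPPt mulmx1 -(mulmxA P^T U) hc -(mulmxA P^T V) //.
have W11 : W 1 1 = 1.
  rewrite /W matgE /g /=.
  by rewrite (nz_eig hVe') scale1r.
have Wdef : W = P^T *m V *m P by [].
clearbody W.
have offd : forall i j, i != j -> W i j = 0.
  move=> i j hij; have := congr1 (fun M : 'M[R]_3 => M i j) hcomm.
  rewrite /= mul_diag_mx mul_mx_diag !mxE.
  case: i hij => [[|[|[|i]]] hi] //; case: j => [[|[|[|j]]] hj] //= _ h.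
  - exact: scal_eq n01 h.
  - exact: scal_eq n02 h.
  - by apply: scal_eq h; rewrite eq_sym.
  - exact: scal_eq n12 h.
  - by apply: scal_eq h; rewrite eq_sym.
  - by apply: scal_eq h; rewrite eq_sym.
have hWd : W = Dg (W 0 0) 1 (W 2 2).
  apply/matrixP => i j; rewrite !mxE.
  case: i => [[|[|[|i]]] hi] //; case: j => [[|[|[|j]]] hj] //=; rewrite ?mulr1n ?mulr0n;
   try (by apply: offd); try (by congr (W _ _); apply: val_inj).
  by rewrite -W11; congr (W _ _); apply: val_inj.
pose O := P^T *m Q *m P.
have hOt : O^T = P^T *m Q^T *m P by rewrite /O !trmx_mul trmxK mulmxA.
have Odef : O = P^T *m Q *m P by [].
clearbody O.
have hOO : O^T *m O = 1%:M.
  rewrite hOt Odef !mulmxA -(mulmxA (P^T *m Q^T) P P^T) hPPt mulmx1 -(mulmxA P^T Q^T Q) hQ mulmx1 hPP //.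
have hWO : W = O *m Dg l1 1 l3 *m O^T.
  by rewrite hOt Odef Wdef hVQ {1}hU !mulmxA.
have tr1 : \tr W = \tr (Dg l1 1 l3).
  by rewrite hWO mxtrace_mulC mulmxA hOO mul1mx.
have tr2 : \tr (W *m W) = \tr (Dg l1 1 l3 *m Dg l1 1 l3).
  rewrite hWO !mulmxA -(mulmxA (O *m Dg l1 1 l3) O^T O) hOO mulmx1.
  by rewrite -!mulmxA mxtrace_mulC !mulmxA -(mulmxA (Dg l1 1 l3 *m Dg l1 1 l3) O^T O) hOO mulmx1.
have hV : V = P *m W *m P^T.
  by rewrite Wdef !mulmxA hPPt mul1mx -mulmxA hPPt mulmx1.
move: hWd tr1 tr2; set w0 := W 0 0; set w2 := W 2 2 => hWd.
rewrite hWd trDg trDg2 trDg trDg2 => tr1 tr2.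
have hw2 : w2 = l1 + l3 - w0 by lra.
have E : 2 * ((w0 - l1) * (w0 - l3)) = (w0 * w0 + 1 * 1 + w2 * w2) - (l1 * l1 + 1 * 1 + l3 * l3).
  by rewrite hw2; ring.
rewrite tr2 subrr in E.
move/eqP: E; rewrite mulf_eq0 pnatr_eq0 /= mulf_eq0 !subr_eq0 => /orP[] /eqP hw0.
  exfalso; move/negP: hUV; apply; apply/eqP.
  have e2 : w2 = l3 by lra.
  by rewrite hV hWd hw0 e2 hU.
exists P; split => //.
have e2 : w2 = l1 by lra.
by rewrite hV hWd hw0 e2.
Qed.

Lemma transfer (P : 'M[R]_3) (k a c r : R) :
  P^T *m P = 1%:M -> P *m P^T = 1%:M ->
  k ^+ 2 = 1 -> a ^+ 2 + c ^+ 2 = 2 -> 2 * r ^+ 2 = 1 ->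
  [/\ SO3 (P *m Rot k a c *m P^T),
      unit_vec3 (P *m (r *: V3 1 0 (-k))) &
      (P *m Rot k a c *m P^T) *m (P *m Dg a 1 c *m P^T) - 1%:M =
      tensor3 (P *m ((2 * r) *: V3 ((a + c) / 2 * a - 1) 0 (k * (a - c) / 2 * a)))
              (P *m (r *: V3 1 0 (-k)))].
Proof.
move=> hPP hPPt hk hac hr; split.
- split.
    rewrite !trmx_mul trmxK !mulmxA -(mulmxA (P *m (Rot k a c)^T) P^T P) hPP mulmx1.
    rewrite -(mulmxA P (Rot k a c)^T) Rot_orth // mulmx1 hPPt //.
  by rewrite !det_mulmx det_Rot // mulr1 -det_mulmx hPPt det1.
- rewrite /unit_vec3 trmx_mul mulmxA -(mulmxA _ P^T P) hPP mulmx1.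
  rewrite !mxE !big_ord_recl big_ord0 !mxE /= -[RHS]hr.
  apply: (eq_by (z := r^+2 * (k^+2 - 1))); [ring | by rewrite hk subrr mulr0].
have -> : P *m Rot k a c *m P^T *m (P *m Dg a 1 c *m P^T) - 1%:M =
   P *m (Rot k a c *m Dg a 1 c - 1%:M) *m P^T.
  by rewrite mulmxBr mulmxBl mulmx1 hPPt !mulmxA -(mulmxA (P *m Rot k a c) P^T P) hPP mulmx1.
rewrite Rot_rank1 // /tensor3 trmx_mul -scalemxAr linearZ /=. rewrite mulmxA -!scalemxAl -scalemxAr scalerA !mulmxA.
have -> : 2 * r * r = 1 by rewrite -mulrA -expr2.
by rewrite scale1r.
Qed.


Lemma diff_tensor (A B : 'M[R]_3) b b' m :
  A - 1%:M = tensor3 b m -> B - 1%:M = tensor3 b' m -> A - B = tensor3 (b - b') m.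
Proof. by move=> h1 h2; rewrite /tensor3 mulmxBl -/(tensor3 b m) -/(tensor3 b' m) -h1 -h2 opprB addrA subrK. Qed.

Lemma nonpar (P : 'M[R]_3) (r : R) : P^T *m P = 1%:M -> 0 < r ->
  ~ parallel3 (P *m (r *: V3 1 0 (-1))) (P *m (r *: V3 1 0 (- -1))).
Proof.
move=> hPP hr [c [h|h]]; have := congr1 (mulmx P^T) h;
  rewrite -!scalemxAr !mulmxA hPP !mul1mx => hh;
  have := congr1 (fun M : 'cV[R]_3 => M 0 0) hh;
  have := congr1 (fun M : 'cV[R]_3 => M 2 0) hh; rewrite /= !mxE /=; nra.
Qed.
End S.

Theorem mainTheorem4 (R : realType) (U V Q : 'M[R]_3) (l1 l3 : R) :
  spd3 U -> spd3 V -> U != V -> U *m V = V *m U ->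
  SO3 Q -> V = Q *m U *m Q^T ->
  0 < l1 -> l1 < 1 -> 1 < l3 ->
  is_eigenvalue3 U l1 -> is_eigenvalue3 U 1 -> is_eigenvalue3 U l3 ->
  (exists e : 'cV[R]_3, e != 0 /\ U *m e = e /\ V *m e = e) ->
  l3 = Num.sqrt (2 - l1 ^+ 2) ->
  exists (Rup Rvp Rum Rvm : 'M[R]_3) (bup bvp bum bvm mp mm : 'cV[R]_3),
    [/\ SO3 Rup, SO3 Rvp, SO3 Rum & SO3 Rvm] /\
    [/\ unit_vec3 mp, unit_vec3 mm & ~ parallel3 mp mm] /\
    [/\ Rup *m U - 1%:M = tensor3 bup mp,
        Rvp *m V - 1%:M = tensor3 bvp mp,
        Rum *m U - 1%:M = tensor3 bum mm &
        Rvm *m V - 1%:M = tensor3 bvm mm] /\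
    [/\ Rup *m U - Rvp *m V = tensor3 (bup - bvp) mp &
        Rum *m U - Rvm *m V = tensor3 (bum - bvm) mm].
Proof.
move=> hU hV hUV hc hQ hVQ h0 h1 h2 e1 _ e3 he hl3.
have [P [hPP hPPt hUd hVd]] := basis hU hV hUV hc hQ hVQ h0 h1 h2 e1 e3 he.
have hac : l1 ^+ 2 + l3 ^+ 2 = 2.
  rewrite hl3 sqr_sqrtr; first by rewrite addrC subrK.
  rewrite subr_ge0; have : l1 ^+ 2 <= 1 by rewrite expr2; nra.
  by move=> h; apply: (le_trans h); rewrite ler1n.
have hca : l3 ^+ 2 + l1 ^+ 2 = 2 by rewrite addrC.
pose r := (Num.sqrt (2 : R))^-1.
have hr0 : 0 < r by rewrite invr_gt0 sqrtr_gt0 ltr0n.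
have hr : 2 * r ^+ 2 = 1.
  by rewrite /r exprVn sqr_sqrtr ?ler0n // mulfV // pnatr_eq0.
have k1 : (1 : R) ^+ 2 = 1 by rewrite expr1n.
have k2 : (-1 : R) ^+ 2 = 1 by rewrite sqrrN expr1n.
have [S1 N1 E1] := transfer hPP hPPt k1 hac hr.
have [S2 N2 E2] := transfer hPP hPPt k1 hca hr.
have [S3 N3 E3] := transfer hPP hPPt k2 hac hr.
have [S4 N4 E4] := transfer hPP hPPt k2 hca hr.
rewrite -hUd -hVd in E1 E2 E3 E4.
eexists _, _, _, _, _, _, _, _, _, _.
split; first by split; [exact: S1 | exact: S2 | exact: S3 | exact: S4].
split; first by split; [exact: N1 | exact: N3 | exact: nonpar hPP hr0].
split; first by split; [exact: E1 | exact: E2 | exact: E3 | exact: E4].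
by split; apply: diff_tensor; [exact: E1 | exact: E2 | exact: E3 | exact: E4].
Qed.
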